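(* Let $\mathcal{A}$ be a collection of hyperplanes in $Q = S_1\times\cdots\times S_n$, no two of which are parallel, let $0\le a\le n$, let $\mathbb{P}_a$ be a probability measure on $Q_a$, let $\delta_{a+1},\dots,\delta_n \in [0,1/2]$, and let $\mathbb{P}_k$, $\alpha_k$, $c_k$ be defined as in the context. Then for each $a < k \le n$, $$M_k^{(1)} \le \frac{c_{k-1}(1)}{|S_k|} \qquad\text{and}\qquad M_k^{(2)} \le \frac{c_{k-1}(3)}{|S_k|^2}.$$ Moreover, if in addition $|S_j| \ge 3$ for each $j\in[n]$, and no hyperplane $A_F$ with $F \in \mathcal{N}_k$ has $|F| = 1$, then $$M_k^{(2)} \le \frac{1}{|S_k|^2}\big(c_{k-1}(3) - 2c_{k-1}(1) + 1\big).$$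
   Context: $S_1,\dots,S_n$ are finite sets each with at least two elements; $Q = S_1\times\cdots\times S_n$ and $Q_k = S_1\times\cdots\times S_k$. A hyperplane is $A = A_1\times\cdots\times A_n\subseteq Q$ with each $A_k$ either $S_k$ or a singleton in $S_k$; $F(A)=\{k: A_k\text{ is a singleton}\}$ is its set of fixed coordinates; hyperplanes are parallel if they have the same $F$. Hyperplanes in $\mathcal{A}$ have non-empty $F(A)$; since no two are parallel, write $\mathcal{A}=\{A_F : F\in\mathcal{F}\}$ with $\mathcal{F}=\{F(A):A\in\mathcal{A}\}$. A set $X\subseteq Q_k$ is identified with $X\times S_{k+1}\times\cdots\times S_n\subseteq Q$ (such sets are called $Q_k$-measurable); a hyperplane with $F(A)\subseteq[k]$ is viewed as a subset of $Q_k$. Let $\mathcal{F}_k=\{F\in\mathcal{F}: F\subseteq[k]\}$, $\mathcal{N}_k = \mathcal{F}_k\setminus\mathcal{F}_{k-1}$ and $B_k = \bigcup_{F\in\mathcal{N}_k} A_F\subseteq Q_k$. Measures: given $\mathbb{P}_{k-1}$ on $Q_{k-1}$ ($k>a$), for $x\in Q_{k-1}$ let $\alpha_k(x) = |\{y\in S_k : (x,y)\in B_k\}|/|S_k|$, and for $x\in Q_{k-1}, y\in S_k$ set $\mathbb{P}_k(x,y) = \max\{0, \frac{\alpha_k(x)-\delta_k}{\alpha_k(x)(1-\delta_k)}\}\cdot \frac{\mathbb{P}_{k-1}(x)}{|S_k|}$ if $(x,y)\in B_k$, and $\mathbb{P}_k(x,y)=\min\{\frac{1}{1-\alpha_k(x)},\frac{1}{1-\delta_k}\}\cdot\frac{\mathbb{P}_{k-1}(x)}{|S_k|}$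 otherwise. Let $\mathbb{E}_{k-1}$ denote expectation over $x\sim\mathbb{P}_{k-1}$, and $M_k^{(1)}=\mathbb{E}_{k-1}[\alpha_k(x)]$, $M_k^{(2)}=\mathbb{E}_{k-1}[\alpha_k(x)^2]$. For $I\subseteq[a]$, $c(I)=\max\{\mathbb{P}_a(H): H \text{ a hyperplane in } Q_a \text{ with } F(H)=I\}$ (so $c(\emptyset)=1$); for $J\subseteq[a+1,n]$, $\nu(J)=\prod_{j\in J}\frac{1}{(1-\delta_j)|S_j|}$; and for $k\ge a$, $c_k(x) = \sum_{I\subseteq[a]}c(I)x^{|I|}\prod_{j=a+1}^k\big(1+\frac{x}{(1-\delta_j)|S_j|}\big)$. *)

(* Defs.v *)
(* Conventions:
   - the finite sets S_1..S_n are subsets [S j] (j = 1..n) of a common finite type T;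
   - a point of Q_k is a sequence x of length k with x_i (0-based position i) in S (i+1);
   - a hyperplane in Q_m is an m-tuple of [option T]: [None] at position i means the
     factor S_(i+1), [Some y] means the singleton {y}; position i <-> coordinate i+1. *)
From HB Require Import structures.
From mathcomp Require Import all_boot all_order all_algebra.
Set Implicit Arguments.
Unset Strict Implicit.
Unset Printing Implicit Defensive.
Import Order.TTheory GRing.Theory Num.Theory.
Local Open Scope ring_scope.

Section Defs.
Variable T : finType.
Variable S : nat -> {set T}.

Definition inQ (k : nat) (x : seq T) : bool :=
  (size x == k) && all (fun p => p.2 \in S p.1) (zip (iota 1 k) x).

Definition isHyp (m : nat) (H : m.-tuple (option T)) : bool :=
  [forall i : 'I_m, if tnth H i is Some y then y \in S i.+1 else true].

(* F(H), as a set of positions (position i <-> coordinate i+1) *)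
Definition Fix (m : nat) (H : m.-tuple (option T)) : {set 'I_m} :=
  [set i | tnth H i != None].

Definition subk (m : nat) (F : {set 'I_m}) (k : nat) : bool :=
  [forall i in F, (i < k)%N].

(* the point x (of some Q_k with F(H) \subseteq [k]) lies in H *)
Definition inHyp (m : nat) (H : m.-tuple (option T)) (x : seq T) : bool :=
  [forall i : 'I_m, if tnth H i is Some y then onth x i == Some y else true].

Variable n : nat.
Variable Acal : {set n.-tuple (option T)}.

Definition newk (k : nat) (A : n.-tuple (option T)) : bool :=
  subk (Fix A) k && ~~ subk (Fix A) k.-1.

Definition inB (k : nat) (z : seq T) : bool :=
  [exists A in Acal, newk k A && inHyp A z].

Variable R : realFieldType.

Definition alpha (k : nat) (x : seq T) : R :=
  #|[set y in S k | inB k (rcons x y)]|%:R / #|S k|%:R.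

Variable delta : nat -> R.

(* P_k(x,y) = weight k x y * P_(k-1)(x) *)
Definition weight (k : nat) (x : seq T) (y : T) : R :=
  if inB k (rcons x y) then
    Num.max 0 ((alpha k x - delta k) / (alpha k x * (1 - delta k))) / #|S k|%:R
  else
    Num.min (1 / (1 - alpha k x)) (1 / (1 - delta k)) / #|S k|%:R.

Variable a : nat.
Variable Pa : seq T -> R.

Fixpoint Paux (m : nat) (s : seq T) : R :=
  match m with
  | 0 => Pa s
  | m'.+1 =>
    match s with
    | [::] => 0
    | y :: s' => weight (size s) (belast y s') (last y s') * Paux m' (belast y s')
    end
  end.

Definition Pk (k : nat) (x : seq T) : R := Paux (k - a) x.

Definition M1 (k : nat) : R :=
  \sum_(x : (k.-1).-tuple T | inQ k.-1 x) Pk k.-1 x * alpha k x.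
Definition M2 (k : nat) : R :=
  \sum_(x : (k.-1).-tuple T | inQ k.-1 x) Pk k.-1 x * (alpha k x) ^+ 2.

Definition PaH (H : a.-tuple (option T)) : R :=
  \sum_(x : a.-tuple T | inQ a x && inHyp H x) Pa x.

Definition cI (I : {set 'I_a}) : R :=
  \big[Num.max/0]_(H : a.-tuple (option T) | isHyp H && (Fix H == I)) PaH H.

Definition ck (k : nat) (x : R) : R :=
  \sum_(I : {set 'I_a}) cI I * x ^+ #|I| *
     \prod_(a.+1 <= j < k.+1) (1 + x / ((1 - delta j) * #|S j|%:R)).

End Defs.

(* Main.v *)
Require Import Defs.
From HB Require Import structures.
From mathcomp Require Import all_boot all_order all_algebra.
From mathcomp Require Import ring lra.
Import Order.TTheory GRing.Theory Num.Theory.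
Local Open Scope ring_scope.
Set Implicit Arguments.
Unset Strict Implicit.

Section Aux.
Variables (R : realFieldType) (T : finType) (n : nat)
  (S : nat -> {set T}) (Acal : {set n.-tuple (option T)})
  (a : nat) (Pa : seq T -> R) (delta : nat -> R).

Lemma Paux_rcons d x y :
  Paux S Acal delta Pa d.+1 (rcons x y) =
  weight S Acal delta (size x).+1 x y * Paux S Acal delta Pa d x.
Proof.
case: x => [|x0 x] //=.
by rewrite belast_rcons last_rcons size_rcons.
Qed.

Lemma inQ_rcons m x y :
  inQ S m.+1 (rcons x y) = inQ S m x && (y \in S m.+1).
Proof.
rewrite /inQ size_rcons eqSS.
have -> : iota 1 m.+1 = rcons (iota 1 m) m.+1.
  by rewrite -cats1 -[m.+1]addn1 iotaD add1n addn1.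
case: eqP => // Hs.
by rewrite zip_rcons ?size_iota // all_rcons /= andbC.
Qed.

Lemma sum_tuple_rcons m (F : seq T -> R) :
  \sum_(t : m.+1.-tuple T) F t = \sum_(t : m.-tuple T) \sum_(y : T) F (rcons t y).
Proof.
rewrite pair_bigA /=.
pose h (p : m.-tuple T * T) : m.+1.-tuple T := [tuple of rcons p.1 p.2].
pose g (t : m.+1.-tuple T) : m.-tuple T * T :=
  ([tuple of belast (thead t) (behead t)], last (thead t) (behead t)).
rewrite (reindex h) /=; last first.
  exists g => [[t y]|t] _.
    rewrite /g /h /=; congr pair; last first.
      by case: t => [[|z s] Hs] //=; rewrite ?last_rcons.
    apply: val_inj => /=.
    by case: t => [[|z s] Hs] //=; rewrite belast_rcons.
  apply: val_inj => /=.
  rewrite [t]tuple_eta /=. by rewrite -lastI.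
by [].
Qed.

End Aux.

Section Real.
Variable R : realFieldType.

Lemma key_ineq (al de : R) : 0 <= al <= 1 -> 0 <= de <= 1/2 ->
  al * Num.max 0 ((al - de) / (al * (1 - de))) +
  (1 - al) * Num.min (1 / (1 - al)) (1 / (1 - de)) <= 1.
Proof.
move=> /andP[al0 al1] /andP[de0 de1].
have de1' : 0 < 1 - de by rewrite subr_gt0 (le_lt_trans de1) // ltr_pdivrMr // mul1r ltr1n.
have [->|alnz] := eqVneq al 0.
  rewrite mul0r add0r subr0 mul1r ge_min; apply/orP; left; by rewrite div1r invr1.
have [->|al1nz] := eqVneq al 1.
  rewrite subrr mul0r addr0 !mul1r divff; last by rewrite gt_eqF.
  by rewrite max_r.
have alp : 0 < al by rewrite lt_def alnz al0.
have alp1 : 0 < 1 - al by rewrite subr_gt0 lt_def al1 eq_sym al1nz.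
have [alde|deal] := leP al de.
  rewrite max_l; last first.
    apply: mulr_le0_ge0; first by rewrite subr_le0.
    by rewrite invr_ge0 mulr_ge0 // ltW.
  rewrite mulr0 add0r.
  apply: (le_trans (y := (1 - al) * (1 / (1 - al)))).
    by rewrite ler_wpM2l ?subr_ge0 // ge_min lexx.
  by rewrite mulrC div1r mulVf // gt_eqF.
rewrite max_r; last by apply: divr_ge0; [rewrite subr_ge0 ltW | apply: mulr_ge0; apply: ltW].
apply: (le_trans (y := al * ((al - de) / (al * (1 - de))) + (1 - al) * (1 / (1 - de)))).
  by rewrite lerD2l ler_wpM2l ?subr_ge0 // ge_min lexx orbT.
have -> : al * ((al - de) / (al * (1 - de))) = (al - de) / (1 - de).
  by field; rewrite !gt_eqF.
suff -> : (al - de) / (1 - de) + (1 - al) * (1 / (1 - de)) = 1 by [].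
by field; rewrite gt_eqF.
Qed.

End Real.

Section Aux.
Variables (R : realFieldType) (T : finType) (n : nat)
  (S : nat -> {set T}) (Acal : {set n.-tuple (option T)})
  (a : nat) (Pa : seq T -> R) (delta : nat -> R).

Lemma alpha_bounds k x : 0 <= alpha S Acal R k x <= 1.
Proof.
rewrite /alpha.
have le : (#|[set y in S k | inB Acal k (rcons x y)]| <= #|S k|)%N.
  by apply: subset_leq_card; apply/subsetP => y; rewrite inE => /andP[].
have [->|Np] := posnP #|S k|; first by rewrite invr0 mulr0 lexx ler01.
rewrite divr_ge0 ?ler0n //= ler_pdivrMr ?ltr0n // mul1r ler_nat //.
Qed.

Lemma de_facts (d : R) : 0 <= d <= 1/2 -> 0 < 1 - d.
Proof. move=> /andP[h1 h2]; lra. Qed.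

Lemma weight_ge0 k x y : 0 <= delta k <= 1/2 -> 0 <= weight S Acal delta k x y.
Proof.
move=> hd; have := de_facts hd; have := alpha_bounds k x => /andP[a0 a1] d1.
rewrite /weight; case: ifP => _; apply: divr_ge0 => //.
  by rewrite le_max lexx.
rewrite le_min !div1r !invr_ge0 subr_ge0 a1 /=; exact: ltW.
Qed.

Lemma weight_le k x y : 0 <= delta k <= 1/2 -> (0 < #|S k|)%N ->
  weight S Acal delta k x y <= 1 / ((1 - delta k) * #|S k|%:R).
Proof.
move=> hd Np; have := de_facts hd; have := alpha_bounds k x => /andP[a0 a1] d1.
move: hd => /andP[d0 _].
have Np' : 0 < (#|S k|%:R : R) by rewrite ltr0n.
have -> : 1 / ((1 - delta k) * #|S k|%:R) = (1 / (1 - delta k)) / #|S k|%:R.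
  by field; rewrite !gt_eqF.
rewrite /weight; case: ifP => _; rewrite ler_pM2r ?invr_gt0 //; last first.
  by rewrite ge_min lexx orbT.
rewrite ge_max divr_ge0 ?ler01 ?(ltW d1) //=.
set al := alpha S Acal R k x.
have [->|anz] := eqVneq al 0; first by rewrite mul0r invr0 mulr0 divr_ge0 ?ler01 ?(ltW d1).
have alp : 0 < al by rewrite lt_def anz a0.
rewrite invfM mulrA ler_pM2r ?invr_gt0 // ler_pdivrMr // mul1r.
by rewrite lerBlDr lerDl.
Qed.

Lemma sum_weight k x : 0 <= delta k <= 1/2 ->
  \sum_(y in S k) weight S Acal delta k x y <= 1.
Proof.
move=> hd; have := de_facts hd; have := alpha_bounds k x => /andP[a0 a1] d1.
set b := fun y => inB Acal k (rcons x y).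
rewrite (bigID b) /=.
pose M := Num.max 0 ((alpha S Acal R k x - delta k) / (alpha S Acal R k x * (1 - delta k))).
pose m := Num.min (1 / (1 - alpha S Acal R k x)) (1 / (1 - delta k)).
set N := #|S k|.
have -> : \sum_(i in S k | b i) weight S Acal delta k x i = (M / N%:R) *+ #|[set y in S k | b y]|.
  rewrite -sumr_const; apply: eq_big => [y|y]; first by rewrite inE.
  by rewrite /weight => /andP[_]; rewrite /b /= => ->.
have -> : \sum_(i in S k | ~~ b i) weight S Acal delta k x i = (m / N%:R) *+ #|[set y in S k | ~~ b y]|.
  rewrite -sumr_const; apply: eq_big => [y|y]; first by rewrite inE.
  by rewrite /weight => /andP[_]; rewrite /b /= => /negPf ->.
have HN : (#|[set y in S k | b y]| + #|[set y in S k | ~~ b y]| = N)%N.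
  rewrite /N -(cardsID [set y | b y] (S k)); congr (_ + _)%N.
    by apply: eq_card => y; rewrite !inE andbC.
  by apply: eq_card => y; rewrite !inE andbC.
have := key_ineq (alpha_bounds k x) hd.
rewrite -/M -/m /alpha -/N -/b.
have [N0|Np] := posnP N.
  move: HN; rewrite N0 => /eqP; rewrite addn_eq0 => /andP[/eqP -> /eqP ->].
  by rewrite !mulr0n addr0 ler01.
have Hu : #|[set y in S k | inB Acal k (rcons x y)]| = #|[set y in S k | b y]| by [].
rewrite Hu.
clearbody M m.
move: HN; set u := #|[set y in S k | b y]|; set v := #|[set y in S k | ~~ b y]| => HN.
clearbody u v N. subst N. rewrite natrD.
rewrite -(mulr_natr (M / _) u) -(mulr_natr (m / _) v).
have Hp : (u%:R + v%:R : R) != 0 by rewrite -natrD pnatr_eq0 -lt0n.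
suff -> : M / (u%:R + v%:R) * u%:R + m / (u%:R + v%:R) * v%:R = u%:R / (u%:R + v%:R) * M + (1 - u%:R / (u%:R + v%:R)) * m :> R by [].
move: Hp; set U := (u%:R : R); set V := (v%:R : R); clearbody U V => Hp.
by field.
Qed.

End Aux.

Section Main.
Variables (R : realFieldType) (T : finType) (n : nat)
  (S : nat -> {set T}) (Acal : {set n.-tuple (option T)})
  (a : nat) (Pa : seq T -> R) (delta : nat -> R).

Definition mt (p : nat -> option T) (x : seq T) : bool :=
  all (fun i => if p i is Some z then nth z x i == z else true) (iota 0 (size x)).

Lemma mt_rcons p x y :
  mt p (rcons x y) = mt p x && (if p (size x) is Some z then y == z else true).
Proof.
rewrite /mt size_rcons -addn1 iotaD all_cat /= andbT add0n.
congr andb.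
  apply: eq_in_all => i; rewrite mem_iota add0n => /andP[_ hi].
  by case: (p i) => // z; rewrite nth_rcons hi.
by case: (p (size x)) => // z; rewrite nth_rcons ltnn eqxx.
Qed.

Lemma onth_some (x : seq T) i z : (i < size x)%N -> onth x i = Some (nth z x i).
Proof. by elim: x i => [|y x IH] [|i] //= /IH. Qed.

Lemma inQ_size m x : inQ S m x -> size x = m.
Proof. by case/andP => /eqP. Qed.

Lemma inQ_nth m x i z : inQ S m x -> (i < m)%N -> nth z x i \in S i.+1.
Proof.
case/andP => /eqP hs /all_nthP hall hi.
have := hall (0%N, z) i; rewrite size_zip size_iota hs minnn => /(_ hi).
by rewrite nth_zip ?size_iota ?hs //= nth_iota // add1n.
Qed.

Definition nu j : R := 1 / ((1 - delta j) * #|S j|%:R).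

Definition Ip (p : nat -> option T) : {set 'I_a} := [set i : 'I_a | p i != None].

Lemma cI_ge0 (I : {set 'I_a}) : 0 <= cI S Pa I.
Proof. exact: bigmax_ge_id. Qed.


Lemma Paux_ge0 
  (HS : forall j, (1 <= j <= n)%N -> (2 <= #|S j|)%N)
  (HPa : forall x : a.-tuple T, inQ S a x -> 0 <= Pa x)
  (Hd : forall j, (a < j <= n)%N -> 0 <= delta j <= 1 / 2) d :
  forall m (x : seq T), m = (a + d)%N -> (a + d <= n)%N -> inQ S m x ->
  0 <= Paux S Acal delta Pa d x.
Proof.
elim: d => [|d IH] m x -> hn.
  rewrite addn0 /= => hq.
  have hs : size x == a by case/andP: hq.
  exact: (HPa (Tuple hs)).
rewrite addnS in hn *; case/lastP: x => [|x y]; first by case/andP.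
rewrite inQ_rcons => /andP[hq hy].
rewrite Paux_rcons (inQ_size hq) mulr_ge0 //.
  by apply: weight_ge0; apply: Hd; rewrite hn ltnS leq_addr.
by apply: (IH (a + d)%N) => //; apply: ltnW.
Qed.


Lemma nu_ge0 j : 0 <= delta j <= 1/2 -> 0 <= nu j.
Proof.
move=> hd; have := de_facts hd => h.
by rewrite /nu divr_ge0 ?ler01 // mulr_ge0 ?ler0n // ltW.
Qed.

Lemma Lbound
  (HS : forall j, (1 <= j <= n)%N -> (2 <= #|S j|)%N)
  (HPa : forall x : a.-tuple T, inQ S a x -> 0 <= Pa x)
  (Hd : forall j, (a < j <= n)%N -> 0 <= delta j <= 1 / 2) d :
  forall m (p : nat -> option T), m = (a + d)%N -> (a + d <= n)%N ->
  \sum_(x : m.-tuple T | inQ S m x && mt p x) Paux S Acal delta Pa d x <=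
  cI S Pa (Ip p) * \prod_(j < d) (if p (a + j)%N is Some _ then nu (a + j).+1 else 1).
Proof.
elim: d => [|d IH] m p -> hn.
  rewrite big_ord0 mulr1 addn0 /=.
  pose H : a.-tuple (option T) := [tuple p i | i < a].
  have Hm : forall x : a.-tuple T, mt p x = inHyp H x.
    move=> x; apply/allP/forallP => [h i|h i].
      rewrite tnth_mktuple; case hp: (p i) => [z|] //.
      have := h i; rewrite mem_iota add0n size_tuple ltn_ord hp => /(_ isT) /eqP <-.
      by rewrite (onth_some z) ?size_tuple.
    rewrite mem_iota add0n size_tuple => hi.
    have := h (Ordinal hi); rewrite tnth_mktuple /=.
    case: (p i) => [z|] //; rewrite (onth_some z) ?size_tuple //; by move=> /eqP [->].
  case hH: (isHyp S H).
    rewrite /cI; apply: (@Order.TotalTheory.bigmax_sup _ _ _ _ H).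
      rewrite hH /=; apply/eqP/setP => i; rewrite !inE tnth_mktuple //.
    rewrite /PaH le_eqVlt; apply/orP; left; apply/eqP.
    by apply: eq_bigl => x; rewrite Hm.
  rewrite big1 ?cI_ge0 // => x /andP[hq hm].
  exfalso; move/negbT: hH => /negP; apply; apply/forallP => i.
  rewrite tnth_mktuple; case hp: (p i) => [z|] //.
  move: hm => /allP /(_ i); rewrite mem_iota add0n size_tuple ltn_ord hp.
  move=> /(_ isT) /eqP <-; exact: inQ_nth hq (ltn_ord i).
rewrite addnS in hn *.
set g := if p (a + d)%N is Some _ then nu (a + d).+1 else 1.
have hda : 0 <= delta (a + d).+1 <= 1/2 by apply: Hd; rewrite hn ltnS leq_addr.
have g0 : 0 <= g by rewrite /g; case: (p _) => //; rewrite nu_ge0.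
rewrite big_mkcond /=.
rewrite (sum_tuple_rcons (a + d) (fun s => if inQ S (a + d).+1 s && mt p s then Paux S Acal delta Pa d.+1 s else 0)).
pose inner (t : seq T) := \sum_(y : T) (if (y \in S (a + d).+1) && (if p (a + d)%N is Some z then y == z else true)
   then weight S Acal delta (a + d).+1 t y else 0).
apply: (le_trans (y := \sum_(t : (a + d).-tuple T) (if inQ S (a + d) t && mt p t then Paux S Acal delta Pa d t * g else 0))).
  apply: ler_sum => t _.
  rewrite (eq_bigr (fun y => if inQ S (a + d) t && mt p t then Paux S Acal delta Pa d t *
       (if (y \in S (a + d).+1) && (if p (a + d)%N is Some z then y == z else true)
        then weight S Acal delta (a + d).+1 t y else 0) else 0)); last first.
    move=> y _; rewrite inQ_rcons mt_rcons Paux_rcons size_tuple.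
    case: (inQ S (a + d) t); case: (mt p t); rewrite /= ?andbF //;
    by case: ifP => _; rewrite ?mulr0 // mulrC.
  case hc: (inQ S (a + d) t && mt p t); last by rewrite big1.
  rewrite -mulr_sumr ler_wpM2l //.
    by apply: (Paux_ge0 HS HPa Hd (m := (a + d)%N)) => //; [exact: ltnW | case/andP: hc].
  rewrite /g; case: (p (a + d)%N) => [z|].
    rewrite (bigD1 z) //= big1 => [|y /negPf hy]; last by rewrite hy andbF.
    rewrite addr0 eqxx andbT; case: ifP => _; last exact: nu_ge0.
    apply: weight_le => //; apply: (leq_trans _ (HS (a + d).+1 _)) => //.
  rewrite -big_mkcond /=.
  apply: le_trans (sum_weight S Acal t hda).
  by rewrite le_eqVlt; apply/orP; left; apply/eqP; apply: eq_bigl => y; rewrite andbT.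
rewrite -big_mkcond /= -mulr_suml big_ord_recr /= mulrA ler_wpM2r //.
by apply: IH => //; apply: ltnW.
Qed.

End Main.

Section Comb.
Variable R : realFieldType.

Lemma sum2_ffun (X : finType) (G : X -> bool -> bool -> R) :
  \sum_(f1 : {ffun X -> bool}) \sum_(f2 : {ffun X -> bool}) \prod_i G i (f1 i) (f2 i) =
  \prod_i \sum_(b1 : bool) \sum_(b2 : bool) G i b1 b2.
Proof.
rewrite (eq_bigr (fun f1 : {ffun X -> bool} => \prod_i \sum_(b2 : bool) G i (f1 i) b2)).
  by rewrite -(bigA_distr_bigA (fun i b1 => \sum_(b2 : bool) G i b1 b2)).
by move=> f1 _; rewrite (bigA_distr_bigA (fun i b2 => G i (f1 i) b2)).
Qed.

Definition setb (X : finType) (g : {ffun X -> bool}) : {set X} := [set i | g i].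

Lemma sum_set_ffun (X : finType) (F : {set X} -> R) :
  \sum_(I : {set X}) F I = \sum_(g : {ffun X -> bool}) F (setb g).
Proof.
rewrite (reindex (@setb X)) //.
exists (fun I : {set X} => [ffun i => i \in I]) => [g _|I _].
  by apply/ffunP => i; rewrite ffunE inE.
by apply/setP => i; rewrite inE ffunE.
Qed.

Lemma count_union (X : finType) (I : {set X}) :
  \sum_(I1 : {set X}) \sum_(I2 : {set X}) ((I == I1 :|: I2)%:R : R) = 3 ^+ #|I|.
Proof.
rewrite sum_set_ffun.
under eq_bigr => g1 _ do rewrite sum_set_ffun.
rewrite (eq_bigr (fun g1 : {ffun X -> bool} => \sum_(g2 : {ffun X -> bool})
   \prod_i ((((i \in I) == (g1 i || g2 i)))%:R : R))); last first.
  move=> g1 _; apply: eq_bigr => g2 _.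
  have [->|neq] := eqVneq I (setb g1 :|: setb g2).
    by rewrite big1 // => i _; rewrite !inE eqxx.
  have [i hi] : exists i, (i \in I) != (g1 i || g2 i).
    apply/existsP; apply: contraR neq => /existsPn h; apply/eqP/setP => i.
    by move: (h i); rewrite negbK !inE => /eqP.
  by rewrite (bigD1 i) //= (negPf hi) mul0r.
rewrite (sum2_ffun (fun i b1 b2 => (((i \in I) == (b1 || b2))%:R : R))).
rewrite (eq_bigr (fun i => if i \in I then 3 else 1)); last first.
  move=> i _; rewrite !big_bool /=.
  by case: (i \in I) => /=; rewrite ?addr0 ?add0r // -!addrA.
by rewrite -big_mkcond /= prodr_const.
Qed.

Variables (a d : nat) (c : {set 'I_a} -> R) (w : 'I_d -> R).

Definition hK (K : {set 'I_a} * {ffun 'I_d -> bool}) : R :=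
  c K.1 * \prod_(j < d) (if K.2 j then w j else 1).

Definition Kunion (K1 K2 : {set 'I_a} * {ffun 'I_d -> bool}) :
  {set 'I_a} * {ffun 'I_d -> bool} := (K1.1 :|: K2.1, [ffun j => K1.2 j || K2.2 j]).

Lemma pairK (F : {set 'I_a} * {ffun 'I_d -> bool} -> R) :
  \sum_K F K = \sum_I \sum_f F (I, f).
Proof. by rewrite pair_bigA; apply: eq_bigr => -[]. Qed.

Lemma E1 : \sum_K hK K = \sum_I c I * \prod_(j < d) (1 + w j).
Proof.
rewrite pairK.
apply: eq_bigr => I _; rewrite /hK /= -mulr_sumr; congr (_ * _).
rewrite -(bigA_distr_bigA (fun j (b : bool) => if b then w j else 1)).
by apply: eq_bigr => j _; rewrite big_bool addrC.
Qed.

Lemma E3 : \sum_K1 \sum_K2 hK (Kunion K1 K2) =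
  \sum_I c I * 3 ^+ #|I| * \prod_(j < d) (1 + 3 * w j).
Proof.
rewrite pairK.
under eq_bigr => I1 _ do under eq_bigr => f1 _ do rewrite pairK.
rewrite /hK /=.
under eq_bigr => I1 _ do rewrite exchange_big /=.
pose W := \sum_(f1 : {ffun 'I_d -> bool}) \sum_(f2 : {ffun 'I_d -> bool})
   \prod_(j < d) (if f1 j || f2 j then w j else 1).
have HW : W = \prod_(j < d) (1 + 3 * w j).
  rewrite /W (sum2_ffun (fun j b1 b2 => if b1 || b2 then w j else 1)).
  by apply: eq_bigr => j _; rewrite !big_bool /=; ring.
under eq_bigr => I1 _ do under eq_bigr => f1 _ do under eq_bigr => I2 _ do
  under eq_bigr => f2 _ do under eq_bigr => j _ do rewrite ffunE /=.
have HH : forall X, \sum_(f1 : {ffun 'I_d -> bool}) \sum_(f2 : {ffun 'I_d -> bool})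
    X * \prod_(j < d) (if f1 j || f2 j then w j else 1) = X * W.
  move=> X; rewrite /W mulr_sumr; apply: eq_bigr => f1 _; by rewrite mulr_sumr.
under eq_bigr => I1 _ do under eq_bigr => I2 _ do rewrite HH.
rewrite HW.
under eq_bigr => I1 _ do rewrite -mulr_suml.
rewrite -mulr_suml -[RHS]mulr_suml; congr (_ * _).
have HC : forall J : {set 'I_a}, c J = \sum_I ((I == J)%:R * c I).
  move=> J; rewrite (bigD1 J) //= eqxx mul1r big1 ?addr0 // => I /negPf ->.
  by rewrite mul0r.
under eq_bigr => I1 _ do under eq_bigr => I2 _ do rewrite HC.
under eq_bigr => I1 _ do rewrite exchange_big.
rewrite exchange_big; apply: eq_bigr => I _.
under eq_bigr => I1 _ do rewrite -mulr_suml.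
by rewrite -mulr_suml count_union mulrC.
Qed.

Definition K0 : {set 'I_a} * {ffun 'I_d -> bool} := (set0, [ffun => false]).

Lemma KunionK0 K : Kunion K0 K = K.
Proof. by case: K => I f; rewrite /Kunion /= set0U; congr pair; apply/ffunP => j; rewrite !ffunE. Qed.

Lemma KunionK0r K : Kunion K K0 = K.
Proof. by case: K => I f; rewrite /Kunion /= setU0; congr pair; apply/ffunP => j; rewrite !ffunE orbF. Qed.

Lemma E3nz : \sum_(K1 | K1 != K0) \sum_(K2 | K2 != K0) hK (Kunion K1 K2) =
  \sum_K1 \sum_K2 hK (Kunion K1 K2) - 2 * \sum_K hK K + hK K0.
Proof.
set T0 := \sum_(K1 | K1 != K0) \sum_(K2 | K2 != K0) hK (Kunion K1 K2).
have H1 : \sum_K1 \sum_K2 hK (Kunion K1 K2) =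
    \sum_K hK K + \sum_K1 \sum_(K2 | K2 != K0) hK (Kunion K1 K2).
  rewrite -big_split /=; apply: eq_bigr => K1 _.
  by rewrite (bigD1 K0) //= KunionK0r.
have H2 : \sum_K1 \sum_(K2 | K2 != K0) hK (Kunion K1 K2) =
    \sum_(K2 | K2 != K0) hK K2 + T0.
  by rewrite (bigD1 K0) //=; under eq_bigr => K2 _ do rewrite KunionK0.
have H3 : \sum_K hK K = hK K0 + \sum_(K | K != K0) hK K by rewrite (bigD1 K0).
rewrite H1 H2 H3; ring.
Qed.

End Comb.

Lemma inj_sum_le (R : realFieldType) (I J : finType) (P : pred I) (Q : pred J)
  (f : I -> J) (F : J -> R) :
  {in P &, injective f} -> (forall i, P i -> Q (f i)) -> (forall j, Q j -> 0 <= F j) ->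
  \sum_(i | P i) F (f i) <= \sum_(j | Q j) F j.
Proof.
move=> finj fPQ F0.
have -> : \sum_(i | P i) F (f i) = \sum_(i in P) F (f i) by [].
rewrite -(big_imset _ finj) /=.
rewrite [X in _ <= X](bigID (fun j => j \in f @: P)) /=.
rewrite -[X in X <= _]addr0 lerD //; last by apply: sumr_ge0 => j /andP[/F0].
rewrite le_eqVlt; apply/orP; left; apply/eqP; apply: eq_bigl => j.
apply/idP/idP => [hj|/andP[]//]; rewrite hj andbT.
by case/imsetP: hj => i hi ->; apply: fPQ.
Qed.

Section Keys.
Variables (T : finType) (n : nat) (S : nat -> {set T}) (Acal : {set n.-tuple (option T)}).

Definition pA (A : n.-tuple (option T)) : nat -> option T := fun i => nth None A i.

Lemma newk_ex m (A : n.-tuple (option T)) : newk (m.+1) A -> exists2 j : 'I_n, (j : nat) = m & tnth A j != None.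
Proof.
case/andP => /forallP h1 /forallPn [j]; rewrite negb_imply => /andP[hj hjm].
exists j => //; last by move: hj; rewrite inE.
by have := h1 j; rewrite hj /= ltnS => hle; apply/eqP; rewrite eqn_leq hle leqNgt.
Qed.

Lemma newk_fix m (A : n.-tuple (option T)) (i : 'I_n) : newk (m.+1) A -> (m <= i)%N ->
  (tnth A i != None) = (i == m :> nat).
Proof.
move=> hk hm; have [j hjm hj] := newk_ex hk.
move: hk => /andP[/forallP h1 _].
apply/idP/idP => [hi|/eqP him].
  by have := h1 i; rewrite inE hi /= ltnS => hle; rewrite eqn_leq hle hm.
by have -> : i = j by apply: val_inj; rewrite /= him hjm.
Qed.

Lemma alpha_card m (x : seq T) : size x = m ->
  (#|[set y in S m.+1 | inB Acal m.+1 (rcons x y)]| <=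
   \sum_(A in Acal | newk m.+1 A) (mt (pA A) x : nat))%N.
Proof.
move=> hs.
rewrite -sum1_card.
apply: (leq_trans (n := \sum_(y in [set y in S m.+1 | inB Acal m.+1 (rcons x y)])
   \sum_(A in Acal | newk m.+1 A) (inHyp A (rcons x y) : nat))).
  apply: leq_sum => y; rewrite inE => /andP[_ /existsP [A /andP[hA /andP[hk hH]]]].
  by rewrite (bigD1 A) /= ?hA ?hk // hH.
rewrite exchange_big /=; apply: leq_sum => A /andP[hA hk].
have [j hjm hj] := newk_ex hk.
case hz: (tnth A j) hj => [z|] // _.
have claim : forall y, inHyp A (rcons x y) -> (y == z) && mt (pA A) x.
  move=> y /forallP h; apply/andP; split.
    have := h j; rewrite hz (onth_some y) ?size_rcons ?hjm ?hs //.
    by rewrite nth_rcons hs ltnn eqxx => /eqP [->].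
  apply/allP => i; rewrite mem_iota add0n => /andP[_ hi].
  rewrite /pA; case hn: (nth None A i) => [z'|] //.
  have hin : (i < n)%N.
    by rewrite ltnNge; apply/negP => hle; move: hn; rewrite nth_default ?size_tuple.
  have := h (Ordinal hin); rewrite (tnth_nth None) /= hn.
  rewrite (onth_some z') ?size_rcons ?(ltn_trans hi) // nth_rcons hi.
  by move=> /eqP [->].
rewrite big_mkcond (bigD1 z) //= big1 ?addn0 => [|y hy].
  case: ifP => _ //; case h: (inHyp A (rcons x z)) => //.
  by case/andP: (claim z h) => _ ->.
case: ifP => _ //; case h: (inHyp A (rcons x y)) => //.
by case/andP: (claim y h) => hyz; rewrite hyz in hy.
Qed.

Variables (a d : nat).

Definition key (A : n.-tuple (option T)) : {set 'I_a} * {ffun 'I_d -> bool} :=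
  (Ip a (pA A), [ffun j : 'I_d => pA A (a + j) != None]).

Definition kf (K : {set 'I_a} * {ffun 'I_d -> bool}) (i : nat) : bool :=
  if (i < a)%N then [exists j : 'I_a, (j == i :> nat) && (j \in K.1)]
  else [exists j : 'I_d, ((a + j)%N == i) && K.2 j].

Lemma key1 A : (key A).1 = Ip a (pA A). Proof. by []. Qed.
Lemma key2 A j : (key A).2 j = (pA A (a + j) != None). Proof. by rewrite ffunE. Qed.

Lemma kf_key A i : (i < a + d)%N -> kf (key A) i = (pA A i != None).
Proof.
move=> hi; rewrite /kf; case: ifP => hia.
  apply/existsP/idP => [[j /andP[/eqP <-]]|h]; first by rewrite key1 inE.
  by exists (Ordinal hia); rewrite eqxx key1 inE.
have hid : (i - a < d)%N by rewrite ltn_subLR // leqNgt hia.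
apply/existsP/idP => [[j /andP[/eqP <-]]|h]; first by rewrite key2.
have e : (a + (i - a) = i)%N by rewrite subnKC // leqNgt hia.
by exists (Ordinal hid); rewrite key2 [X in (X == _)]e eqxx [X in pA A X]e.
Qed.

Lemma kf_K0 i : kf (K0 a d) i = false.
Proof.
by rewrite /kf; case: ifP => _; apply/existsP => -[j]; rewrite ?inE ?ffunE andbF.
Qed.

Lemma fix_key (A : n.-tuple (option T)) (i : 'I_n) : newk (a + d).+1 A ->
  (i \in Fix A) = if (i < a + d)%N then kf (key A) i else (i == a + d :> nat).
Proof.
move=> hk; rewrite inE; case: ifP => hi.
  by rewrite kf_key // /pA (tnth_nth None).
by rewrite (newk_fix hk) // leqNgt hi.
Qed.

Lemma key_inj (HAinj : {in Acal &, forall A B, Fix A = Fix B -> A = B}) :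
  {in [pred A | (A \in Acal) && newk (a + d).+1 A] &, injective key}.
Proof.
move=> A B; rewrite !inE => /andP[hA hkA] /andP[hB hkB] e.
apply: HAinj => //; apply/setP => i.
by rewrite (fix_key i hkA) (fix_key i hkB) e.
Qed.

Lemma key_nz (A : n.-tuple (option T)) : newk (a + d).+1 A -> #|Fix A| != 1%N ->
  key A != K0 a d.
Proof.
move=> hk; apply: contra => /eqP e.
have [j hjm hj] := newk_ex hk.
suff -> : Fix A = [set j] by rewrite cards1.
apply/setP => i; rewrite (fix_key i hk) e kf_K0 inE.
case: ifP => hi.
  by apply/esym/negbTE/eqP => eij; rewrite eij hjm ltnn in hi.
by apply/eqP/eqP => [h|->//]; apply: val_inj; rewrite /= h hjm.
Qed.

End Keys.

Section Final.
Variables (R : realFieldType) (T : finType) (n : nat)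
  (S : nat -> {set T}) (Acal : {set n.-tuple (option T)})
  (a : nat) (Pa : seq T -> R) (delta : nat -> R).

Definition pu (p q : nat -> option T) : nat -> option T :=
  fun i => if p i is Some z then Some z else q i.

Lemma mt_pu p q x : mt p x -> mt q x -> mt (pu p q) x.
Proof.
move=> /allP hp /allP hq; apply/allP => i hi.
have := hp i hi; have := hq i hi; rewrite /pu.
by case: (p i) => [z|] //; case: (q i).
Qed.

Lemma Ip_pu p q : Ip a (pu p q) = Ip a p :|: Ip a q.
Proof. by apply/setP => i; rewrite !inE /pu; case: (p i). Qed.

Lemma sum_indic (I : finType) (P : pred I) (b : pred I) (F : I -> R) :
  \sum_(x | P x) F x * (b x)%:R = \sum_(x | P x && b x) F x.
Proof.
rewrite big_mkcondr /=; apply: eq_bigr => x _.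
by case: (b x); rewrite ?mulr1 ?mulr0.
Qed.

Lemma sub_sum_le (I : finType) (P Q : pred I) (F : I -> R) :
  (forall i, P i -> Q i) -> (forall i, Q i -> 0 <= F i) ->
  \sum_(i | P i) F i <= \sum_(i | Q i) F i.
Proof.
move=> hPQ hF.
exact: (inj_sum_le (f := id) (F := F) (P := P) (Q := Q) (fun x y _ _ e => e) hPQ hF).
Qed.

Lemma cI_le1 (HPa : forall x : a.-tuple T, inQ S a x -> 0 <= Pa x)
  (Hsum : \sum_(x : a.-tuple T | inQ S a x) Pa x = 1) (I : {set 'I_a}) :
  cI S Pa I <= 1.
Proof.
apply: bigmax_le; first exact: ler01.
move=> H _; rewrite /PaH -Hsum.
apply: sub_sum_le => [x /andP[]//|x]; exact: HPa.
Qed.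

Lemma prod_shift d (F : nat -> R) :
  \prod_(a.+1 <= j < (a + d).+1) F j = \prod_(j < d) F (a + j).+1.
Proof.
rewrite -{1}[a.+1]add0n big_addn subSS addKn big_mkord.
by apply: eq_bigr => j _; rewrite addnS addnC.
Qed.

Lemma ck_E1 d :
  ck S delta a Pa (a + d) 1 =
  \sum_(I : {set 'I_a}) cI S Pa I * \prod_(j < d) (1 + nu S delta (a + j).+1).
Proof.
rewrite /ck; apply: eq_bigr => I _.
by rewrite expr1n mulr1 prod_shift.
Qed.

Lemma ck_E3 d :
  ck S delta a Pa (a + d) 3 =
  \sum_(I : {set 'I_a}) cI S Pa I * 3 ^+ #|I| * \prod_(j < d) (1 + 3 * nu S delta (a + j).+1).
Proof.
rewrite /ck; apply: eq_bigr => I _.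
rewrite prod_shift; congr (_ * _); apply: eq_bigr => j _.
by rewrite /nu mul1r.
Qed.

End Final.

Theorem theorem3p2 (R : realFieldType) (T : finType) (n : nat)
  (S : nat -> {set T}) (Acal : {set n.-tuple (option T)})
  (a : nat) (Pa : seq T -> R) (delta : nat -> R) :
  (forall j, (1 <= j <= n)%N -> (2 <= #|S j|)%N) ->
  (forall A, A \in Acal -> isHyp S A) ->
  (forall A, A \in Acal -> Fix A != set0) ->
  {in Acal &, forall A B, Fix A = Fix B -> A = B} ->
  (a <= n)%N ->
  (forall x : a.-tuple T, inQ S a x -> 0 <= Pa x) ->
  \sum_(x : a.-tuple T | inQ S a x) Pa x = 1 ->
  (forall j, (a < j <= n)%N -> 0 <= delta j <= 1 / 2) ->
  forall k, (a < k <= n)%N ->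
    [/\ M1 S Acal delta a Pa k <= ck S delta a Pa k.-1 1 / #|S k|%:R,
        M2 S Acal delta a Pa k <= ck S delta a Pa k.-1 3 / (#|S k|%:R ^+ 2)
      & ((forall j, (1 <= j <= n)%N -> (3 <= #|S j|)%N) ->
         (forall A, A \in Acal -> newk k A -> #|Fix A| != 1%N) ->
         M2 S Acal delta a Pa k <=
           (ck S delta a Pa k.-1 3 - 2 * ck S delta a Pa k.-1 1 + 1) / (#|S k|%:R ^+ 2))].
Proof.
move=> HS _ _ Hinj han HPa Hsum Hd k /andP[hak hkn].
rewrite /M1 /M2 /Pk.
set m := k.-1.
have km : k = m.+1 by rewrite /m prednK // (leq_ltn_trans (leq0n a) hak).
set d := (m - a)%N.
have md : m = (a + d)%N by rewrite /d subnKC // -ltnS -km.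
have hmn : (a + d <= n)%N by rewrite -md -ltnS -km ltnW.
have Np : (0 < #|S k|)%N by apply: leq_trans (HS k _); rewrite // hkn andbT (leq_ltn_trans (leq0n a) hak).
have Np' : 0 < (#|S k|%:R : R) by rewrite ltr0n.
pose c := cI S Pa (a := a).
pose w := fun j : 'I_d => nu S delta (a + j).+1.
pose D := fun A : n.-tuple (option T) => (A \in Acal) && newk k A.
have w0 : forall j, 0 <= w j.
  move=> j; apply: nu_ge0; apply: Hd; rewrite ltnS leq_addr /=.
  by apply: leq_trans hmn; rewrite ltn_add2l.
have hK0 : forall K, 0 <= hK c w K.
  move=> K; rewrite /hK mulr_ge0 ?cI_ge0 //; apply: prodr_ge0 => j _.
  by case: (K.2 j).
have Halpha : forall x : m.-tuple T,
    alpha S Acal R k x <= (\sum_(A | D A) ((mt (pA A) x)%:R : R)) / #|S k|%:R.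
  move=> x; rewrite /alpha ler_pM2r ?invr_gt0 // -natr_sum ler_nat.
  rewrite km; apply: (leq_trans (alpha_card S Acal (size_tuple x))).
  by rewrite -km.
have HB : forall A : n.-tuple (option T), \sum_(x : m.-tuple T | inQ S m x && mt (pA A) x) Paux S Acal delta Pa d x
    <= hK c w (key a d A).
  move=> A; apply: le_trans (Lbound Acal HS HPa Hd (pA A) md hmn) _.
  rewrite /hK key1 le_eqVlt; apply/orP; left; apply/eqP; congr (_ * _).
  by apply: eq_bigr => j _; rewrite key2; case: (pA A _).
have HB2 : forall A B : n.-tuple (option T),
    \sum_(x : m.-tuple T | inQ S m x && (mt (pA A) x && mt (pA B) x)) Paux S Acal delta Pa d x
    <= hK c w (Kunion (key a d A) (key a d B)).
  move=> A B.
  apply: le_trans (sub_sum_le (Q := fun x : m.-tuple T => inQ S m x && mt (pu (pA A) (pA B)) x) _ _) _.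
  - by move=> x /andP[hq /andP[h1 h2]]; rewrite hq mt_pu.
  - by move=> x /andP[hq _]; apply: (Paux_ge0 Acal HS HPa Hd md hmn hq).
  apply: le_trans (Lbound Acal HS HPa Hd (pu (pA A) (pA B)) md hmn) _.
  rewrite /hK /Kunion /= Ip_pu le_eqVlt; apply/orP; left; apply/eqP; congr (_ * _).
  apply: eq_bigr => j _; rewrite !ffunE /pu.
  by case: (pA A _) => [z|] //=; case: (pA B _).
have hk' : k = (a + d).+1 by rewrite km md.
have Dinj : {in D &, injective (key a d)}.
  move=> A B hA hB; apply: (key_inj Hinj); rewrite inE -hk'; [exact: hA | exact: hB].
have hPx : forall x : m.-tuple T, inQ S m x -> 0 <= Paux S Acal delta Pa d x.
  by move=> x hq; apply: (Paux_ge0 Acal HS HPa Hd md hmn hq).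
have M2le : \sum_(x : m.-tuple T | inQ S m x) Paux S Acal delta Pa d x * alpha S Acal R k x ^+ 2
    <= (\sum_(A | D A) \sum_(B | D B) hK c w (Kunion (key a d A) (key a d B))) / #|S k|%:R ^+ 2.
  apply: (le_trans (y := \sum_(x : m.-tuple T | inQ S m x) Paux S Acal delta Pa d x *
     ((\sum_(A | D A) \sum_(B | D B) ((mt (pA A) x && mt (pA B) x)%:R : R)) / #|S k|%:R ^+ 2))).
    apply: ler_sum => x hq; apply: ler_wpM2l; first exact: hPx.
    have ha0 : 0 <= alpha S Acal R k x by case/andP: (alpha_bounds R S Acal k x).
    apply: (le_trans (y := ((\sum_(A | D A) ((mt (pA A) x)%:R : R)) / #|S k|%:R) ^+ 2)).
      by rewrite !expr2; apply: ler_pM => //; exact: Halpha.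
    rewrite expr_div_n expr2 mulr_suml le_eqVlt; apply/orP; left; apply/eqP; congr (_ / _).
    apply: eq_bigr => A _; rewrite mulr_sumr; apply: eq_bigr => B _.
    by rewrite -natrM mulnb.
  under eq_bigr => x _ do rewrite mulrA.
  rewrite -mulr_suml ler_pM2r ?invr_gt0 ?exprn_gt0 //.
  under eq_bigr => x _ do rewrite mulr_sumr.
  rewrite exchange_big /=.
  under eq_bigr => A _ do under eq_bigr => x _ do rewrite mulr_sumr.
  under eq_bigr => A _ do rewrite exchange_big /=.
  apply: ler_sum => A _; apply: ler_sum => B _.
  rewrite (sum_indic _ (fun x : m.-tuple T => mt (pA A) x && mt (pA B) x)).
  exact: HB2.
have Hpair : forall Q : pred (({set 'I_a} * {ffun 'I_d -> bool}) * ({set 'I_a} * {ffun 'I_d -> bool})),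
   (forall A B, D A -> D B -> Q (key a d A, key a d B)) ->
   \sum_(A | D A) \sum_(B | D B) hK c w (Kunion (key a d A) (key a d B)) <=
   \sum_(p | Q p) hK c w (Kunion p.1 p.2).
  move=> Q hQ; rewrite pair_big /=.
  apply: (inj_sum_le (f := fun p => (key a d p.1, key a d p.2))
            (F := fun p => hK c w (Kunion p.1 p.2))) => //.
    move=> [A1 B1] [A2 B2] /andP[hA1 hB1] /andP[hA2 hB2] e.
    have e1 := f_equal fst e; have e2 := f_equal snd e; simpl in e1, e2.
    by congr pair; [apply: (Dinj _ _ hA1 hA2 e1) | apply: (Dinj _ _ hB1 hB2 e2)].
  by move=> [A B] /andP[hA hB]; apply: hQ.
split.
- apply: (le_trans (y := \sum_(x : m.-tuple T | inQ S m x) Paux S Acal delta Pa d x *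
     ((\sum_(A | D A) ((mt (pA A) x)%:R : R)) / #|S k|%:R))).
    by apply: ler_sum => x hq; apply: ler_wpM2l; [exact: hPx | exact: Halpha].
  under eq_bigr => x _ do rewrite mulrA.
  rewrite -mulr_suml ler_pM2r ?invr_gt0 //.
  under eq_bigr => x _ do rewrite mulr_sumr.
  rewrite exchange_big /=.
  under eq_bigr => A _ do rewrite (sum_indic _ (fun x : m.-tuple T => mt (pA A) x)).
  apply: le_trans (ler_sum _ (fun A _ => HB A)) _.
  have -> : ck S delta a Pa m 1 = \sum_K hK c w K by rewrite md ck_E1 E1.
  apply: (inj_sum_le (f := key a d) (F := hK c w) (Q := predT)) => //.
- apply: le_trans M2le _; rewrite ler_pM2r ?invr_gt0 ?exprn_gt0 //.
  apply: le_trans (Hpair predT _) _ => //.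
  have -> : ck S delta a Pa m 3 = \sum_K1 \sum_K2 hK c w (Kunion K1 K2) by rewrite md ck_E3 E3.
  by rewrite -(pair_bigA _ (fun K1 K2 => hK c w (Kunion K1 K2))).
- move=> _ HF1.
  apply: le_trans M2le _; rewrite ler_pM2r ?invr_gt0 ?exprn_gt0 //.
  apply: le_trans (Hpair [pred p | (p.1 != K0 a d) && (p.2 != K0 a d)] _) _.
    move=> A B /andP[hA hkA] /andP[hB hkB]; rewrite inE /=.
    by rewrite !key_nz -?hk' ?HF1.
  rewrite (eq_bigl (fun p => (p.1 != K0 a d) && (p.2 != K0 a d))) //.
  rewrite -(pair_big (fun K1 => K1 != K0 a d) (fun K2 => K2 != K0 a d) (fun K1 K2 => hK c w (Kunion K1 K2))) /=.
  rewrite E3nz.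
  have -> : ck S delta a Pa m 3 = \sum_K1 \sum_K2 hK c w (Kunion K1 K2) by rewrite md ck_E3 E3.
  have -> : ck S delta a Pa m 1 = \sum_K hK c w K by rewrite md ck_E1 E1.
  rewrite lerD2l /hK /= big1 ?mulr1 => [|j _]; last by rewrite ffunE.
  exact: cI_le1.
Qed.
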